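(* Let $M^2$ be a minimal surface in $\mathbb R^4$ and let $\{x,y,n_1,n_2\}$ be a positively oriented orthonormal frame field with $x,y$ tangent and $n_1,n_2$ normal to $M^2$. Then the invariant $\varkappa$ equals the curvature of the normal connection of $M^2$: $$\varkappa=g\big(R^\perp(x,y)n_2,\,n_1\big),$$ where $D$ is the normal connection of $M^2$ and $R^\perp(x,y)=D_xD_y-D_yD_x-D_{[x,y]}$.
   Context: $\mathbb R^4$ carries the standard metric $g=\langle\cdot,\cdot\rangle$ and flat connection $\nabla'$; everything is smooth and local. A regular surface is $M^2: z=z(u,v)$, $(u,v)\in\mathcal D\subset\mathbb R^2$, with $E=\langle z_u,z_u\rangle$, $F=\langle z_u,z_v\rangle$, $G=\langle z_v,z_v\rangle$, $W=\sqrt{EG-F^2}$, and second fundamental form $\sigma$ (normal part of $\nabla'$). Minimal means the mean curvature vector $H=\tfrac12(\sigma(x,x)+\sigma(y,y))$ ($x,y$ an orthonormal tangent basis) vanishes. For an orthonormal normal frame $\{e_1,e_2\}$ such that $(z_u,z_v,e_1,e_2)$ is positively oriented, write $\sigma(z_u,z_u)=c_{11}^1e_1+c_{11}^2e_2$, $\sigma(z_u,z_v)=c_{12}^1e_1+c_{12}^2e_2$, $\sigma(z_v,z_v)=c_{22}^1e_1+c_{22}^2e_2$, and set $\Delta_1=c_{11}^1c_{12}^2-c_{12}^1c_{11}^2$, $\Delta_2=c_{11}^1c_{22}^2-c_{22}^1c_{11}^2$, $\Delta_3=c_{12}^1c_{22}^2-c_{22}^1c_{12}^2$, $L=2\Delta_1/W$,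 $M=\Delta_2/W$, $N=2\Delta_3/W$. The invariants of $M^2$ are $k=\frac{LN-M^2}{EG-F^2}$ and $\varkappa=\frac{EN+GL-2FM}{2(EG-F^2)}$. The normal connection is $D_XV=(\nabla'_XV)^\perp$ for normal fields $V$. *)

(* Defs.v *)
From Stdlib Require Import Reals Lra ClassicalEpsilon List.
Import ListNotations.
Open Scope R_scope.

Record V4 := mkV4 { v1 : R; v2 : R; v3 : R; v4 : R }.

Definition vadd (a b : V4) : V4 :=
  mkV4 (v1 a + v1 b) (v2 a + v2 b) (v3 a + v3 b) (v4 a + v4 b).
Definition vsub (a b : V4) : V4 :=
  mkV4 (v1 a - v1 b) (v2 a - v2 b) (v3 a - v3 b) (v4 a - v4 b).
Definition vscal (k : R) (a : V4) : V4 :=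
  mkV4 (k * v1 a) (k * v2 a) (k * v3 a) (k * v4 a).
Definition vzero : V4 := mkV4 0 0 0 0.
Definition dot (a b : V4) : R :=
  v1 a * v1 b + v2 a * v2 b + v3 a * v3 b + v4 a * v4 b.

Definition det3 (a11 a12 a13 a21 a22 a23 a31 a32 a33 : R) : R :=
  a11 * (a22 * a33 - a23 * a32)
  - a12 * (a21 * a33 - a23 * a31)
  + a13 * (a21 * a32 - a22 * a31).

Definition det4 (a b c d : V4) : R :=
  v1 a * det3 (v2 b) (v2 c) (v2 d) (v3 b) (v3 c) (v3 d) (v4 b) (v4 c) (v4 d)
  - v1 b * det3 (v2 a) (v2 c) (v2 d) (v3 a) (v3 c) (v3 d) (v4 a) (v4 c) (v4 d)
  + v1 c * det3 (v2 a) (v2 b) (v2 d) (v3 a) (v3 b) (v3 d) (v4 a) (v4 b) (v4 d)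
  - v1 d * det3 (v2 a) (v2 b) (v2 c) (v3 a) (v3 b) (v3 c) (v4 a) (v4 b) (v4 c).

(** Partial derivatives of a scalar function of (u,v): the derivative
    value when it exists (it is then unique), an arbitrary value otherwise. *)
Definition Pu (f : R -> R -> R) : R -> R -> R :=
  fun u v => epsilon (inhabits 0) (fun l => derivable_pt_lim (fun t => f t v) u l).
Definition Pv (f : R -> R -> R) : R -> R -> R :=
  fun u v => epsilon (inhabits 0) (fun l => derivable_pt_lim (fun t => f u t) v l).

Fixpoint iterP (w : list bool) (f : R -> R -> R) : R -> R -> R :=
  match w with
  | nil => f
  | b :: w' => (if b then Pu else Pv) (iterP w' f)
  end.

Definition cont2_at (D : R -> R -> Prop) (f : R -> R -> R) (u v : R) : Prop :=
  forall eps, 0 < eps -> exists del, 0 < del /\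
    forall u' v', D u' v' -> Rabs (u' - u) < del -> Rabs (v' - v) < del ->
      Rabs (f u' v' - f u v) < eps.

Definition open2 (D : R -> R -> Prop) : Prop :=
  forall u v, D u v -> exists r, 0 < r /\
    forall u' v', Rabs (u' - u) < r -> Rabs (v' - v) < r -> D u' v'.

Definition smooth_on (D : R -> R -> Prop) (f : R -> R -> R) : Prop :=
  forall (w : list bool) u v, D u v ->
    (exists l, derivable_pt_lim (fun t => iterP w f t v) u l) /\
    (exists l, derivable_pt_lim (fun t => iterP w f u t) v l) /\
    cont2_at D (iterP w f) u v.

Definition field := R -> R -> V4.

Definition smoothV (D : R -> R -> Prop) (X : field) : Prop :=
  smooth_on D (fun u v => v1 (X u v)) /\ smooth_on D (fun u v => v2 (X u v)) /\
  smooth_on D (fun u v => v3 (X u v)) /\ smooth_on D (fun u v => v4 (X u v)).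

Definition PuV (X : field) : field := fun u v =>
  mkV4 (Pu (fun a b => v1 (X a b)) u v) (Pu (fun a b => v2 (X a b)) u v)
       (Pu (fun a b => v3 (X a b)) u v) (Pu (fun a b => v4 (X a b)) u v).
Definition PvV (X : field) : field := fun u v =>
  mkV4 (Pv (fun a b => v1 (X a b)) u v) (Pv (fun a b => v2 (X a b)) u v)
       (Pv (fun a b => v3 (X a b)) u v) (Pv (fun a b => v4 (X a b)) u v).

Section Surface.
Variable z : field.

Definition zu : field := PuV z.
Definition zv : field := PvV z.
Definition zuu : field := PuV (PuV z).
Definition zuv : field := PvV (PuV z).
Definition zvv : field := PvV (PvV z).

Definition EE u v := dot (zu u v) (zu u v).
Definition FF u v := dot (zu u v) (zv u v).
Definition GG u v := dot (zv u v) (zv u v).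
Definition W2 u v := EE u v * GG u v - FF u v ^ 2.
Definition WW u v := sqrt (W2 u v).

(** Coefficients of the tangential part of a vector w at (u,v) in the basis
    z_u, z_v (solution of the Gram system); for tangent w, w = tc1 z_u + tc2 z_v. *)
Definition tc1 u v (w : V4) : R :=
  (GG u v * dot w (zu u v) - FF u v * dot w (zv u v)) / W2 u v.
Definition tc2 u v (w : V4) : R :=
  (EE u v * dot w (zv u v) - FF u v * dot w (zu u v)) / W2 u v.

Definition nrm u v (w : V4) : V4 :=
  vsub w (vadd (vscal (tc1 u v w) (zu u v)) (vscal (tc2 u v w) (zv u v))).

(** Second fundamental form at (u,v) on tangent vectors w1, w2:
    sigma(z_i,z_j) = (nabla'_{z_i} z_j)^perp = (z_ij)^perp, extended bilinearly. *)
Definition sigma u v (w1 w2 : V4) : V4 :=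
  let a1 := tc1 u v w1 in let b1 := tc2 u v w1 in
  let a2 := tc1 u v w2 in let b2 := tc2 u v w2 in
  nrm u v (vadd (vscal (a1 * a2) (zuu u v))
          (vadd (vscal (a1 * b2 + b1 * a2) (zuv u v))
                (vscal (b1 * b2) (zvv u v)))).

(** Minimality, computed with an orthonormal tangent basis x, y:
    H = 1/2 (sigma(x,x) + sigma(y,y)) = 0. *)
Definition minimal_wrt (D : R -> R -> Prop) (x y : field) : Prop :=
  forall u v, D u v ->
    vscal (1/2) (vadd (sigma u v (x u v) (x u v)) (sigma u v (y u v) (y u v))) = vzero.

Definition c11 u v (e : V4) := dot (sigma u v (zu u v) (zu u v)) e.
Definition c12 u v (e : V4) := dot (sigma u v (zu u v) (zv u v)) e.
Definition c22 u v (e : V4) := dot (sigma u v (zv u v) (zv u v)) e.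

Definition Delta1 u v e1 e2 := c11 u v e1 * c12 u v e2 - c12 u v e1 * c11 u v e2.
Definition Delta2 u v e1 e2 := c11 u v e1 * c22 u v e2 - c22 u v e1 * c11 u v e2.
Definition Delta3 u v e1 e2 := c12 u v e1 * c22 u v e2 - c22 u v e1 * c12 u v e2.

Definition LL u v e1 e2 := 2 * Delta1 u v e1 e2 / WW u v.
Definition MM u v e1 e2 := Delta2 u v e1 e2 / WW u v.
Definition NN u v e1 e2 := 2 * Delta3 u v e1 e2 / WW u v.

Definition kinv u v e1 e2 :=
  (LL u v e1 e2 * NN u v e1 e2 - MM u v e1 e2 ^ 2) / W2 u v.
Definition varkappa u v e1 e2 :=
  (EE u v * NN u v e1 e2 + GG u v * LL u v e1 e2 - 2 * FF u v * MM u v e1 e2)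
  / (2 * W2 u v).

Definition pos_normal_frame u v (e1 e2 : V4) : Prop :=
  dot e1 e1 = 1 /\ dot e2 e2 = 1 /\ dot e1 e2 = 0 /\
  dot e1 (zu u v) = 0 /\ dot e1 (zv u v) = 0 /\
  dot e2 (zu u v) = 0 /\ dot e2 (zv u v) = 0 /\
  0 < det4 (zu u v) (zv u v) e1 e2.

(** Tangent vector fields act as derivations; a tangent field X has
    coordinate coefficients aX = tc1 X, bX = tc2 X (X = aX z_u + bX z_v). *)
Definition coefA (X : field) : R -> R -> R := fun u v => tc1 u v (X u v).
Definition coefB (X : field) : R -> R -> R := fun u v => tc2 u v (X u v).

Definition derivF (X : field) (f : R -> R -> R) : R -> R -> R :=
  fun u v => coefA X u v * Pu f u v + coefB X u v * Pv f u v.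

Definition nabla' (X V : field) : field := fun u v =>
  vadd (vscal (coefA X u v) (PuV V u v)) (vscal (coefB X u v) (PvV V u v)).

Definition Dn (X V : field) : field := fun u v => nrm u v (nabla' X V u v).

Definition bracket (X Y : field) : field := fun u v =>
  vadd (vscal (derivF X (coefA Y) u v - derivF Y (coefA X) u v) (zu u v))
       (vscal (derivF X (coefB Y) u v - derivF Y (coefB X) u v) (zv u v)).

Definition Rperp (X Y V : field) : field := fun u v =>
  vsub (vsub (Dn X (Dn Y V) u v) (Dn Y (Dn X V) u v)) (Dn (bracket X Y) V u v).

Definition adapted_frame (D : R -> R -> Prop) (x y n1 n2 : field) : Prop :=
  forall u v, D u v ->
    dot (x u v) (x u v) = 1 /\ dot (y u v) (y u v) = 1 /\
    dot (n1 u v) (n1 u v) = 1 /\ dot (n2 u v) (n2 u v) = 1 /\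
    dot (x u v) (y u v) = 0 /\ dot (x u v) (n1 u v) = 0 /\
    dot (x u v) (n2 u v) = 0 /\ dot (y u v) (n1 u v) = 0 /\
    dot (y u v) (n2 u v) = 0 /\ dot (n1 u v) (n2 u v) = 0 /\
    (exists a b, x u v = vadd (vscal a (zu u v)) (vscal b (zv u v))) /\
    (exists a b, y u v = vadd (vscal a (zu u v)) (vscal b (zv u v))) /\
    dot (n1 u v) (zu u v) = 0 /\ dot (n1 u v) (zv u v) = 0 /\
    dot (n2 u v) (zu u v) = 0 /\ dot (n2 u v) (zv u v) = 0 /\
    0 < det4 (x u v) (y u v) (n1 u v) (n2 u v).

End Surface.

(* Main.v *)
Require Import Defs.
From Stdlib Require Import Reals Lra ClassicalEpsilon List.
Import ListNotations.
Open Scope R_scope.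

Definition exD (g : R -> R) x := exists l, derivable_pt_lim g x l.
Definition D1 (g : R -> R) x := epsilon (inhabits 0) (fun l => derivable_pt_lim g x l).

Lemma D1_spec g x : exD g x -> derivable_pt_lim g x (D1 g x).
Proof. intros H. unfold D1. apply epsilon_spec. exact H. Qed.

Lemma D1_eq g x l : derivable_pt_lim g x l -> D1 g x = l.
Proof. intros H. apply (uniqueness_limite g x); [apply D1_spec; exists l; exact H| exact H]. Qed.

Lemma Pu_D1 f u v : Pu f u v = D1 (fun t => f t v) u.
Proof. reflexivity. Qed.
Lemma Pv_D1 f u v : Pv f u v = D1 (fun t => f u t) v.
Proof. reflexivity. Qed.

Lemma dl_plus f g x l1 l2 : derivable_pt_lim f x l1 -> derivable_pt_lim g x l2 ->
  derivable_pt_lim (fun t => f t + g t) x (l1 + l2).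
Proof. intros; exact (derivable_pt_lim_plus f g x l1 l2 H H0). Qed.
Lemma dl_minus f g x l1 l2 : derivable_pt_lim f x l1 -> derivable_pt_lim g x l2 ->
  derivable_pt_lim (fun t => f t - g t) x (l1 - l2).
Proof. intros; exact (derivable_pt_lim_minus f g x l1 l2 H H0). Qed.
Lemma dl_mult f g x l1 l2 : derivable_pt_lim f x l1 -> derivable_pt_lim g x l2 ->
  derivable_pt_lim (fun t => f t * g t) x (l1 * g x + f x * l2).
Proof. intros; exact (derivable_pt_lim_mult f g x l1 l2 H H0). Qed.
Lemma dl_div f g x l1 l2 : derivable_pt_lim f x l1 -> derivable_pt_lim g x l2 -> g x <> 0 ->
  derivable_pt_lim (fun t => f t / g t) x ((l1 * g x - l2 * f x) / (g x)²).
Proof. intros; exact (derivable_pt_lim_div f g x l1 l2 H H0 H1). Qed.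

Lemma ex_plus f g x : exD f x -> exD g x -> exD (fun t => f t + g t) x.
Proof. intros [l1 H1] [l2 H2]; eexists; apply dl_plus; eauto. Qed.
Lemma ex_minus f g x : exD f x -> exD g x -> exD (fun t => f t - g t) x.
Proof. intros [l1 H1] [l2 H2]; eexists; apply dl_minus; eauto. Qed.
Lemma ex_mult f g x : exD f x -> exD g x -> exD (fun t => f t * g t) x.
Proof. intros [l1 H1] [l2 H2]; eexists; apply dl_mult; eauto. Qed.
Lemma ex_div f g x : exD f x -> exD g x -> g x <> 0 -> exD (fun t => f t / g t) x.
Proof. intros [l1 H1] [l2 H2] H; eexists; apply dl_div; eauto. Qed.
Lemma ex_pow2 f x : exD f x -> exD (fun t => f t ^ 2) x.
Proof. intros H. change (exD (fun t => f t * (f t * 1)) x).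
 apply ex_mult; auto. apply ex_mult; auto. exists 0. apply derivable_pt_lim_const. Qed.

Lemma D1_plus f g x : exD f x -> exD g x -> D1 (fun t => f t + g t) x = D1 f x + D1 g x.
Proof. intros; apply D1_eq, dl_plus; apply D1_spec; auto. Qed.
Lemma D1_mult f g x : exD f x -> exD g x -> D1 (fun t => f t * g t) x = D1 f x * g x + f x * D1 g x.
Proof. intros; apply D1_eq, dl_mult; apply D1_spec; auto. Qed.

Lemma dl_local f g x l r : 0 < r -> (forall t, Rabs (t - x) < r -> f t = g t) ->
  derivable_pt_lim g x l -> derivable_pt_lim f x l.
Proof.
  intros Hr Hfg Hg eps He. destruct (Hg eps He) as [del Hd].
  assert (Hm : 0 < Rmin del r) by (apply Rmin_pos; [apply cond_pos|lra]).
  exists (mkposreal _ Hm). intros h Hh Hh'. simpl in Hh'.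
  rewrite (Hfg (x+h)), (Hfg x).
  - apply Hd; auto. apply Rlt_le_trans with (1:=Hh'); apply Rmin_l.
  - replace (x-x) with 0 by ring. rewrite Rabs_R0; lra.
  - replace (x+h-x) with h by ring. apply Rlt_le_trans with (1:=Hh'); apply Rmin_r.
Qed.

Lemma dl_localconst f x c r : 0 < r -> (forall t, Rabs (t - x) < r -> f t = c) ->
  derivable_pt_lim f x 0.
Proof. intros Hr H. apply (dl_local f (fun _ => c) x 0 r Hr H). apply derivable_pt_lim_const. Qed.

Example test (A B : R -> R -> R) u v : exD (fun t => A t v) u -> exD (fun t => B t v) u ->
  exD (fun t => A t v * B t v + A t v / B t v) u.
Proof. intros. apply ex_plus. apply ex_mult; auto. apply ex_div; auto. Abort.

Definition exU (f : R -> R -> R) u v := exD (fun t => f t v) u.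
Definition exV (f : R -> R -> R) u v := exD (fun t => f u t) v.
Definition exUV (A : field) u v :=
  exU (fun a b => v1 (A a b)) u v /\ exU (fun a b => v2 (A a b)) u v /\
  exU (fun a b => v3 (A a b)) u v /\ exU (fun a b => v4 (A a b)) u v.
Definition exVV (A : field) u v :=
  exV (fun a b => v1 (A a b)) u v /\ exV (fun a b => v2 (A a b)) u v /\
  exV (fun a b => v3 (A a b)) u v /\ exV (fun a b => v4 (A a b)) u v.

Lemma ex_dotU A B u v : exUV A u v -> exUV B u v -> exU (fun a b => dot (A a b) (B a b)) u v.
Proof. intros (a1&a2&a3&a4) (b1&b2&b3&b4). unfold exU, dot.
  repeat apply ex_plus; apply ex_mult; assumption. Qed.
Lemma ex_dotV A B u v : exVV A u v -> exVV B u v -> exV (fun a b => dot (A a b) (B a b)) u v.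
Proof. intros (a1&a2&a3&a4) (b1&b2&b3&b4). unfold exV, dot.
  repeat apply ex_plus; apply ex_mult; assumption. Qed.

Lemma Pu_dot A B u v : exUV A u v -> exUV B u v ->
  Pu (fun a b => dot (A a b) (B a b)) u v = dot (PuV A u v) (B u v) + dot (A u v) (PuV B u v).
Proof. intros (a1&a2&a3&a4) (b1&b2&b3&b4). unfold exU in *. rewrite Pu_D1. unfold dot.
  repeat rewrite D1_plus by (repeat apply ex_plus; apply ex_mult; assumption).
  repeat rewrite D1_mult by assumption. unfold PuV; simpl. rewrite !Pu_D1. ring. Qed.
Lemma Pv_dot A B u v : exVV A u v -> exVV B u v ->
  Pv (fun a b => dot (A a b) (B a b)) u v = dot (PvV A u v) (B u v) + dot (A u v) (PvV B u v).
Proof. intros (a1&a2&a3&a4) (b1&b2&b3&b4). unfold exV in *. rewrite Pv_D1. unfold dot.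
  repeat rewrite D1_plus by (repeat apply ex_plus; apply ex_mult; assumption).
  repeat rewrite D1_mult by assumption. unfold PvV; simpl. rewrite !Pv_D1. ring. Qed.

Lemma smooth_ex D f u v w : smooth_on D f -> D u v -> exU (iterP w f) u v /\ exV (iterP w f) u v.
Proof. intros H Huv. destruct (H w u v Huv) as (H1&H2&_). split; assumption. Qed.

Lemma smoothV_ex D X u v : smoothV D X -> D u v ->
  exUV X u v /\ exVV X u v /\ exUV (PuV X) u v /\ exVV (PuV X) u v /\
  exUV (PvV X) u v /\ exVV (PvV X) u v.
Proof.
  intros (s1&s2&s3&s4) Huv.
  destruct (smooth_ex D _ u v [] s1 Huv) as [a1 b1].
  destruct (smooth_ex D _ u v [] s2 Huv) as [a2 b2].
  destruct (smooth_ex D _ u v [] s3 Huv) as [a3 b3].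
  destruct (smooth_ex D _ u v [] s4 Huv) as [a4 b4].
  destruct (smooth_ex D _ u v [true] s1 Huv) as [c1 d1].
  destruct (smooth_ex D _ u v [true] s2 Huv) as [c2 d2].
  destruct (smooth_ex D _ u v [true] s3 Huv) as [c3 d3].
  destruct (smooth_ex D _ u v [true] s4 Huv) as [c4 d4].
  destruct (smooth_ex D _ u v [false] s1 Huv) as [e1 f1].
  destruct (smooth_ex D _ u v [false] s2 Huv) as [e2 f2].
  destruct (smooth_ex D _ u v [false] s3 Huv) as [e3 f3].
  destruct (smooth_ex D _ u v [false] s4 Huv) as [e4 f4].
  repeat split; assumption.
Qed.

Lemma eq_eps x y : (forall eps, 0 < eps -> Rabs (x - y) < eps) -> x = y.
Proof. intros H. destruct (Req_dec x y) as [|Hn]; auto.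
  assert (0 < Rabs (x - y)) by (apply Rabs_pos_lt; lra).
  specialize (H _ H0). lra. Qed.

Lemma clairaut D f u v : open2 D -> smooth_on D f -> D u v ->
  Pu (Pv f) u v = Pv (Pu f) u v.
Proof.
  intros Hop Hs Huv. apply eq_eps. intros eps Heps.
  assert (He2 : 0 < eps/2) by lra.
  destruct (Hs [false;true] u v Huv) as (_&_&cA).
  destruct (Hs [true;false] u v Huv) as (_&_&cB).
  destruct (cA _ He2) as (d1&Hd1&HA). destruct (cB _ He2) as (d2&Hd2&HB).
  simpl in HA, HB.
  destruct (Hop u v Huv) as (r&Hr&HD).
  set (h := Rmin (Rmin d1 d2) r / 2).
  assert (Hm : 0 < Rmin (Rmin d1 d2) r) by (repeat apply Rmin_pos; auto).
  assert (Hm1 : Rmin (Rmin d1 d2) r <= d1) by (eapply Rle_trans; [apply Rmin_l|apply Rmin_l]).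
  assert (Hm2 : Rmin (Rmin d1 d2) r <= d2) by (eapply Rle_trans; [apply Rmin_l|apply Rmin_r]).
  assert (Hm3 : Rmin (Rmin d1 d2) r <= r) by apply Rmin_r.
  assert (Hh : 0 < h) by (unfold h; lra).
  assert (Hh1 : h < d1) by (unfold h; lra).
  assert (Hh2 : h < d2) by (unfold h; lra).
  assert (Hh3 : h < r) by (unfold h; lra).
  assert (InD : forall s t, u <= s <= u + h -> v <= t <= v + h -> D s t).
  { intros s t Hs1 Ht1. apply HD; apply Rabs_def1; lra. }
  destruct (MVT_cor2 (fun s => f s (v+h) - f s v) (fun s => Pu f s (v+h) - Pu f s v) u (u+h))
    as (s1&E1&Hs1); [lra| |].
  { intros c Hc. apply dl_minus.
    - apply (D1_spec (fun t => f t (v+h))). apply (smooth_ex D f c (v+h) [] Hs); apply InD; lra.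
    - apply (D1_spec (fun t => f t v)). apply (smooth_ex D f c v [] Hs); apply InD; lra. }
  destruct (MVT_cor2 (fun t => Pu f s1 t) (fun t => Pv (Pu f) s1 t) v (v+h))
    as (t1&E2&Ht1); [lra| |].
  { intros c Hc. apply (D1_spec (fun t => Pu f s1 t)).
    apply (smooth_ex D f s1 c [true] Hs); apply InD; lra. }
  destruct (MVT_cor2 (fun t => f (u+h) t - f u t) (fun t => Pv f (u+h) t - Pv f u t) v (v+h))
    as (t2&E3&Ht2); [lra| |].
  { intros c Hc. apply dl_minus.
    - apply (D1_spec (fun t => f (u+h) t)). apply (smooth_ex D f (u+h) c [] Hs); apply InD; lra.
    - apply (D1_spec (fun t => f u t)). apply (smooth_ex D f u c [] Hs); apply InD; lra. }
  destruct (MVT_cor2 (fun s => Pv f s t2) (fun s => Pu (Pv f) s t2) u (u+h))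
    as (s2&E4&Hs2); [lra| |].
  { intros c Hc. apply (D1_spec (fun s => Pv f s t2)).
    apply (smooth_ex D f c t2 [false] Hs); apply InD; lra. }
  assert (Heq : Pv (Pu f) s1 t1 = Pu (Pv f) s2 t2).
  { assert (h * h <> 0) by (apply Rmult_integral_contrapositive; split; lra).
    apply (Rmult_eq_reg_r (h*h)); auto.
    replace (u + h - u) with h in E1, E4 by ring.
    replace (v + h - v) with h in E2, E3 by ring.
    transitivity ((Pu f s1 (v + h) - Pu f s1 v) * h); [rewrite E2; ring|].
    rewrite <- E1. transitivity ((Pv f (u + h) t2 - Pv f u t2) * h); [|rewrite E4; ring].
    rewrite <- E3. ring. }
  assert (X1 := HA s1 t1 ltac:(apply InD; lra) ltac:(apply Rabs_def1; lra) ltac:(apply Rabs_def1; lra)).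
  assert (X2 := HB s2 t2 ltac:(apply InD; lra) ltac:(apply Rabs_def1; lra) ltac:(apply Rabs_def1; lra)).
  rewrite Heq in X1.
  apply Rabs_def2 in X1. apply Rabs_def2 in X2. apply Rabs_def1; lra.
Qed.

Lemma V4_eta (a : V4) : a = mkV4 (v1 a) (v2 a) (v3 a) (v4 a).
Proof. destruct a; reflexivity. Qed.

Lemma dot_comm a b : dot a b = dot b a.
Proof. unfold dot; ring. Qed.
Lemma dot_lin a p b q w : dot (vadd (vscal a p) (vscal b q)) w = a * dot p w + b * dot q w.
Proof. unfold dot, vadd, vscal; simpl; ring. Qed.
Lemma dot_linr a p b q w : dot w (vadd (vscal a p) (vscal b q)) = a * dot w p + b * dot w q.
Proof. unfold dot, vadd, vscal; simpl; ring. Qed.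
Lemma dot_sub3 a b c e : dot (vsub (vsub a b) c) e = dot a e - dot b e - dot c e.
Proof. unfold dot, vsub; simpl; ring. Qed.
Lemma dot_nrmform w a p b q e : dot (vsub w (vadd (vscal a p) (vscal b q))) e = dot w e - a * dot p e - b * dot q e.
Proof. unfold dot, vsub, vadd, vscal; simpl; ring. Qed.
Lemma dot_scal k a e : dot (vscal k a) e = k * dot a e.
Proof. unfold dot, vscal; simpl; ring. Qed.

Lemma vec_zero a b c d r : dot a r = 0 -> dot b r = 0 -> dot c r = 0 -> dot d r = 0 ->
  det4 a b c d <> 0 -> r = vzero.
Proof.
  intros Ha Hb Hc Hd Hdet.
  destruct a as [a1 a2 a3 a4], b as [b1 b2 b3 b4], c as [c1 c2 c3 c4], d as [d1 d2 d3 d4],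
    r as [r1 r2 r3 r4].
  unfold dot in *; simpl in *. unfold vzero.
  set (K := det4 _ _ _ _) in Hdet.
  assert (E1 : K * r1 = det4 (mkV4 (a1*r1+a2*r2+a3*r3+a4*r4) a2 a3 a4) (mkV4 (b1*r1+b2*r2+b3*r3+b4*r4) b2 b3 b4)
     (mkV4 (c1*r1+c2*r2+c3*r3+c4*r4) c2 c3 c4) (mkV4 (d1*r1+d2*r2+d3*r3+d4*r4) d2 d3 d4))
   by (unfold K, det4, det3; simpl; ring).
  assert (E2 : K * r2 = det4 (mkV4 a1 (a1*r1+a2*r2+a3*r3+a4*r4) a3 a4) (mkV4 b1 (b1*r1+b2*r2+b3*r3+b4*r4) b3 b4)
     (mkV4 c1 (c1*r1+c2*r2+c3*r3+c4*r4) c3 c4) (mkV4 d1 (d1*r1+d2*r2+d3*r3+d4*r4) d3 d4))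
   by (unfold K, det4, det3; simpl; ring).
  assert (E3 : K * r3 = det4 (mkV4 a1 a2 (a1*r1+a2*r2+a3*r3+a4*r4) a4) (mkV4 b1 b2 (b1*r1+b2*r2+b3*r3+b4*r4) b4)
     (mkV4 c1 c2 (c1*r1+c2*r2+c3*r3+c4*r4) c4) (mkV4 d1 d2 (d1*r1+d2*r2+d3*r3+d4*r4) d4))
   by (unfold K, det4, det3; simpl; ring).
  assert (E4 : K * r4 = det4 (mkV4 a1 a2 a3 (a1*r1+a2*r2+a3*r3+a4*r4)) (mkV4 b1 b2 b3 (b1*r1+b2*r2+b3*r3+b4*r4))
     (mkV4 c1 c2 c3 (c1*r1+c2*r2+c3*r3+c4*r4)) (mkV4 d1 d2 d3 (d1*r1+d2*r2+d3*r3+d4*r4)))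
   by (unfold K, det4, det3; simpl; ring).
  rewrite Ha, Hb, Hc, Hd in E1, E2, E3, E4.
  unfold det4, det3 in E1, E2, E3, E4; simpl in E1, E2, E3, E4.
  assert (K * r1 = 0) by (rewrite E1; ring).
  assert (K * r2 = 0) by (rewrite E2; ring).
  assert (K * r3 = 0) by (rewrite E3; ring).
  assert (K * r4 = 0) by (rewrite E4; ring).
  f_equal; [apply (Rmult_eq_reg_l K) | apply (Rmult_eq_reg_l K) | apply (Rmult_eq_reg_l K) | apply (Rmult_eq_reg_l K)]; lra.
Qed.

Definition ortho4 (e1 e2 e3 e4 : V4) :=
  dot e1 e1 = 1 /\ dot e2 e2 = 1 /\ dot e3 e3 = 1 /\ dot e4 e4 = 1 /\
  dot e1 e2 = 0 /\ dot e1 e3 = 0 /\ dot e1 e4 = 0 /\ dot e2 e3 = 0 /\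
  dot e2 e4 = 0 /\ dot e3 e4 = 0 /\ det4 e1 e2 e3 e4 <> 0.

Lemma decomp e1 e2 e3 e4 w : ortho4 e1 e2 e3 e4 ->
  w = vadd (vscal (dot w e1) e1) (vadd (vscal (dot w e2) e2)
       (vadd (vscal (dot w e3) e3) (vscal (dot w e4) e4))).
Proof.
  intros (o1&o2&o3&o4&o12&o13&o14&o23&o24&o34&Hdet).
  set (r := vsub w (vadd (vscal (dot w e1) e1) (vadd (vscal (dot w e2) e2)
       (vadd (vscal (dot w e3) e3) (vscal (dot w e4) e4))))).
  assert (Hx : forall e, dot e r = dot e w - dot w e1 * dot e e1 - dot w e2 * dot e e2
                                   - dot w e3 * dot e e3 - dot w e4 * dot e e4).
  { intros e. unfold r, dot, vsub, vadd, vscal; simpl; ring. }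
  assert (Hr : r = vzero).
  { apply (vec_zero e1 e2 e3 e4); auto; rewrite Hx;
    repeat rewrite (dot_comm e2 e1); repeat rewrite (dot_comm e3 e1); repeat rewrite (dot_comm e4 e1);
    repeat rewrite (dot_comm e3 e2); repeat rewrite (dot_comm e4 e2); repeat rewrite (dot_comm e4 e3);
    repeat rewrite (dot_comm w e1); repeat rewrite (dot_comm w e2);
    repeat rewrite (dot_comm w e3); repeat rewrite (dot_comm w e4);
    rewrite ?o1, ?o2, ?o3, ?o4, ?o12, ?o13, ?o14, ?o23, ?o24, ?o34; ring. }
  unfold r in Hr. destruct w, e1, e2, e3, e4. unfold vsub, vadd, vscal, vzero in *; simpl in *.
  injection Hr; intros; f_equal; lra.
Qed.

Lemma dot_full e1 e2 e3 e4 a b : ortho4 e1 e2 e3 e4 ->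
  dot a b = dot a e1 * dot b e1 + dot a e2 * dot b e2 + dot a e3 * dot b e3 + dot a e4 * dot b e4.
Proof.
  intros H. rewrite (decomp e1 e2 e3 e4 a H) at 1. rewrite (decomp e1 e2 e3 e4 b H) at 1.
  destruct H as (o1&o2&o3&o4&o12&o13&o14&o23&o24&o34&Hdet).
  set (a1 := dot a e1); set (a2 := dot a e2); set (a3 := dot a e3); set (a4 := dot a e4);
  set (b1 := dot b e1); set (b2 := dot b e2); set (b3 := dot b e3); set (b4 := dot b e4).
  transitivity (a1*b1*dot e1 e1 + a2*b2*dot e2 e2 + a3*b3*dot e3 e3 + a4*b4*dot e4 e4
     + (a1*b2+a2*b1)*dot e1 e2 + (a1*b3+a3*b1)*dot e1 e3 + (a1*b4+a4*b1)*dot e1 e4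
     + (a2*b3+a3*b2)*dot e2 e3 + (a2*b4+a4*b2)*dot e2 e4 + (a3*b4+a4*b3)*dot e3 e4).
  - unfold dot, vadd, vscal; simpl; ring.
  - rewrite o1, o2, o3, o4, o12, o13, o14, o23, o24, o34; ring.
Qed.

Lemma lemmaC (ZU ZV ZUU ZUV ZVV X Y N1 N2 N1u N1v N2u N2v : V4) aX bX aY bY :
  ortho4 X Y N1 N2 ->
  X = vadd (vscal aX ZU) (vscal bX ZV) -> Y = vadd (vscal aY ZU) (vscal bY ZV) ->
  dot N1u N1 = 0 -> dot N1v N1 = 0 -> dot N2u N2 = 0 -> dot N2v N2 = 0 ->
  dot N1u ZU = - dot N1 ZUU -> dot N1u ZV = - dot N1 ZUV ->
  dot N1v ZU = - dot N1 ZUV -> dot N1v ZV = - dot N1 ZVV ->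
  dot N2u ZU = - dot N2 ZUU -> dot N2u ZV = - dot N2 ZUV ->
  dot N2v ZU = - dot N2 ZUV -> dot N2v ZV = - dot N2 ZVV ->
  dot N2v N1u - dot N2u N1v =
    (aX * aX + aY * aY) * (dot N1 ZUU * dot N2 ZUV - dot N1 ZUV * dot N2 ZUU)
  + (aX * bX + aY * bY) * (dot N1 ZUU * dot N2 ZVV - dot N1 ZVV * dot N2 ZUU)
  + (bX * bX + bY * bY) * (dot N1 ZUV * dot N2 ZVV - dot N1 ZVV * dot N2 ZUV).
Proof.
  intros Ho HX HY a1 a2 a3 a4 b1 b2 b3 b4 c1 c2 c3 c4.
  rewrite (dot_full X Y N1 N2 N2v N1u Ho), (dot_full X Y N1 N2 N2u N1v Ho).
  rewrite HX, HY, !dot_linr.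
  rewrite a1, a2, a3, a4, b1, b2, b3, b4, c1, c2, c3, c4. ring.
Qed.

Lemma final_alg (E F G aX bX aY bY h111 h112 h122 h211 h212 h222 al be ga de K W : R) :
  0 < E * G - F ^ 2 -> W = sqrt (E * G - F ^ 2) ->
  E * aX * aX + 2 * F * aX * bX + G * bX * bX = 1 ->
  E * aY * aY + 2 * F * aY * bY + G * bY * bY = 1 ->
  E * aX * aY + F * (aX * bY + bX * aY) + G * bX * bY = 0 ->
  al * al + be * be = 1 -> ga * ga + de * de = 1 -> al * ga + be * de = 0 ->
  0 < (aX * bY - bX * aY) * K -> 0 < (al * de - be * ga) * K ->
  let c11a := al * h111 + be * h211 in
  let c12a := al * h112 + be * h212 in
  let c22a := al * h122 + be * h222 in
  let c11b := ga * h111 + de * h211 in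
  let c12b := ga * h112 + de * h212 in
  let c22b := ga * h122 + de * h222 in
  let DD1 := c11a * c12b - c12a * c11b in
  let DD2 := c11a * c22b - c22a * c11b in
  let DD3 := c12a * c22b - c22a * c12b in
  (E * (2 * DD3 / W) + G * (2 * DD1 / W) - 2 * F * (DD2 / W)) / (2 * (E * G - F ^ 2)) =
  (aX * bY - bX * aY) *
    ((aX * aX + aY * aY) * (h111 * h212 - h112 * h211)
     + (aX * bX + aY * bY) * (h111 * h222 - h122 * h211)
     + (bX * bX + bY * bY) * (h112 * h222 - h122 * h212)).
Proof.
  intros HW2 HW oX oY oXY oa ob oab Hd Hr. intros.
  set (W2 := E * G - F ^ 2) in *.
  set (d := aX * bY - bX * aY) in *.
  set (rho := al * de - be * ga) in *.
  set (m11 := E * aX * aX + 2 * F * aX * bX + G * bX * bX) in *.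
  set (m22 := E * aY * aY + 2 * F * aY * bY + G * bY * bY) in *.
  set (m12 := E * aX * aY + F * (aX * bY + bX * aY) + G * bX * bY) in *.
  assert (Hd2 : d * d * W2 = 1).
  { transitivity (m11 * m22 - m12 * m12); [unfold d, W2, m11, m22, m12; ring|].
    rewrite oX, oY, oXY; ring. }
  assert (P1 : aX * aX + aY * aY = d * d * G).
  { transitivity (aX * aX * m22 - 2 * aX * aY * m12 + aY * aY * m11);
    [rewrite oX, oY, oXY; ring | unfold d, m11, m22, m12; ring]. }
  assert (P2 : aX * bX + aY * bY = - (d * d * F)).
  { transitivity (aX * bX * m22 - (aX * bY + bX * aY) * m12 + aY * bY * m11);
    [rewrite oX, oY, oXY; ring | unfold d, m11, m22, m12; ring]. }
  assert (P3 : bX * bX + bY * bY = d * d * E).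
  { transitivity (bX * bX * m22 - 2 * bX * bY * m12 + bY * bY * m11);
    [rewrite oX, oY, oXY; ring | unfold d, m11, m22, m12; ring]. }
  assert (Hr2 : rho * rho = 1).
  { transitivity ((al*al+be*be)*(ga*ga+de*de) - (al*ga+be*de)^2); [unfold rho; ring|].
    rewrite oa, ob, oab; ring. }
  assert (E1 : DD1 = rho * (h111 * h212 - h112 * h211)) by (unfold DD1, c11a, c12a, c11b, c12b, rho; ring).
  assert (E2 : DD2 = rho * (h111 * h222 - h122 * h211)) by (unfold DD2, c11a, c22a, c11b, c22b, rho; ring).
  assert (E3 : DD3 = rho * (h112 * h222 - h122 * h212)) by (unfold DD3, c12a, c22a, c12b, c22b, rho; ring).
  assert (Hdr : 0 < d * rho).
  { destruct (Rlt_le_dec 0 (d * rho)) as [|Hn]; auto.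
    assert (0 <= - (d*rho) * (K * K)) by (apply Rmult_le_pos; nra).
    nra. }
  assert (HWp : 0 < W) by (rewrite HW; apply sqrt_lt_R0; auto).
  assert (HWW : W * W = W2) by (rewrite HW; apply sqrt_sqrt; lra).
  assert (HWdr : W * (d * rho) = 1).
  { assert (Hsq : (W * (d * rho)) * (W * (d * rho)) = 1).
    { transitivity ((W * W) * (d * d) * (rho * rho)); [ring|]. rewrite HWW, Hr2. lra. }
    assert (0 < W * (d * rho)) by (apply Rmult_lt_0_compat; auto). nra. }
  assert (HdW : d * W = rho).
  { transitivity ((W * (d * rho)) * rho); [transitivity (d * W * (rho*rho)); [rewrite Hr2; ring|ring]|].
    rewrite HWdr; ring. }
  rewrite P1, P2, P3, E1, E2, E3.
  set (S1 := h111 * h212 - h112 * h211). set (S2 := h111 * h222 - h122 * h211).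
  set (S3 := h112 * h222 - h122 * h212).
  assert (HW2n : W2 <> 0) by lra. assert (HWn : W <> 0) by lra.
  assert (Hdd : d * d = / W2) by (apply (Rmult_eq_reg_r W2); [rewrite Hd2; field|]; auto).
  rewrite <- HdW.
  transitivity (d * (d * d) * (E * S3 + G * S1 - F * S2)).
  - rewrite Hdd. field. auto.
  - ring.
Qed.

Lemma tc_span z u v a b : W2 z u v <> 0 ->
  tc1 z u v (vadd (vscal a (zu z u v)) (vscal b (zv z u v))) = a /\
  tc2 z u v (vadd (vscal a (zu z u v)) (vscal b (zv z u v))) = b.
Proof.
  intros H. unfold tc1, tc2, W2, EE, FF, GG in *. rewrite !dot_lin.
  rewrite (dot_comm (zv z u v) (zu z u v)). split; field; auto.
Qed.

Lemma tc_zu z u v : W2 z u v <> 0 -> tc1 z u v (zu z u v) = 1 /\ tc2 z u v (zu z u v) = 0.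
Proof. intros H. unfold tc1, tc2, W2, EE, FF, GG in *. split; field; auto. Qed.
Lemma tc_zv z u v : W2 z u v <> 0 -> tc1 z u v (zv z u v) = 0 /\ tc2 z u v (zv z u v) = 1.
Proof. intros H. unfold tc1, tc2, W2, EE, FF, GG in *.
  rewrite (dot_comm (zv z u v) (zu z u v)). split; field; auto. Qed.

Lemma nrm_perp z u v w : W2 z u v <> 0 ->
  dot (nrm z u v w) (zu z u v) = 0 /\ dot (nrm z u v w) (zv z u v) = 0.
Proof.
  intros H. unfold nrm. rewrite !dot_nrmform. unfold tc1, tc2, W2, EE, FF, GG in *.
  rewrite (dot_comm (zv z u v) (zu z u v)). split; field; auto.
Qed.

Lemma nrm_dot z u v w e : dot e (zu z u v) = 0 -> dot e (zv z u v) = 0 ->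
  dot (nrm z u v w) e = dot w e.
Proof.
  intros H1 H2. unfold nrm. rewrite dot_nrmform, (dot_comm (zu z u v)), (dot_comm (zv z u v)), H1, H2. ring.
Qed.

Lemma nrm_dec z u v X Y N1 N2 aX bX aY bY w :
  W2 z u v <> 0 -> ortho4 X Y N1 N2 ->
  X = vadd (vscal aX (zu z u v)) (vscal bX (zv z u v)) ->
  Y = vadd (vscal aY (zu z u v)) (vscal bY (zv z u v)) ->
  dot N1 (zu z u v) = 0 -> dot N1 (zv z u v) = 0 ->
  dot N2 (zu z u v) = 0 -> dot N2 (zv z u v) = 0 ->
  nrm z u v w = vadd (vscal (dot w N1) N1) (vscal (dot w N2) N2).
Proof.
  intros HW Ho HX HY p1 p2 p3 p4.
  rewrite (decomp X Y N1 N2 (nrm z u v w) Ho).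
  destruct (nrm_perp z u v w HW) as [q1 q2].
  rewrite (nrm_dot z u v w N1 p1 p2), (nrm_dot z u v w N2 p3 p4).
  assert (E1 : dot (nrm z u v w) X = 0) by (rewrite HX, dot_linr, q1, q2; ring).
  assert (E2 : dot (nrm z u v w) Y = 0) by (rewrite HY, dot_linr, q1, q2; ring).
  rewrite E1, E2. destruct X, Y, N1, N2. unfold vadd, vscal; simpl; f_equal; ring.
Qed.

Lemma sigma_c z u v e : W2 z u v <> 0 -> dot e (zu z u v) = 0 -> dot e (zv z u v) = 0 ->
  c11 z u v e = dot e (zuu z u v) /\ c12 z u v e = dot e (zuv z u v) /\ c22 z u v e = dot e (zvv z u v).
Proof.
  intros HW H1 H2. unfold c11, c12, c22, Defs.sigma; cbv zeta.
  destruct (tc_zu z u v HW) as [a1 a2]. destruct (tc_zv z u v HW) as [b1 b2].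
  rewrite a1, a2, b1, b2, !(nrm_dot z u v _ e H1 H2).
  repeat split; unfold dot, vadd, vscal; simpl; ring.
Qed.

Definition exUs := exU.
Lemma exU_plus f g u v : exU f u v -> exU g u v -> exU (fun a b => f a b + g a b) u v.
Proof. unfold exU, exV; intros; apply ex_plus; auto. Qed.
Lemma exU_minus f g u v : exU f u v -> exU g u v -> exU (fun a b => f a b - g a b) u v.
Proof. unfold exU, exV; intros; apply ex_minus; auto. Qed.
Lemma exU_mult f g u v : exU f u v -> exU g u v -> exU (fun a b => f a b * g a b) u v.
Proof. unfold exU, exV; intros; apply ex_mult; auto. Qed.
Lemma exU_div f g u v : exU f u v -> exU g u v -> g u v <> 0 -> exU (fun a b => f a b / g a b) u v.
Proof. unfold exU, exV; intros; apply ex_div; auto. Qed.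
Lemma exU_pow2 f u v : exU f u v -> exU (fun a b => f a b ^ 2) u v.
Proof. unfold exU, exV; intros; apply ex_pow2; auto. Qed.
Lemma exV_plus f g u v : exV f u v -> exV g u v -> exV (fun a b => f a b + g a b) u v.
Proof. unfold exU, exV; intros; apply ex_plus; auto. Qed.
Lemma exV_minus f g u v : exV f u v -> exV g u v -> exV (fun a b => f a b - g a b) u v.
Proof. unfold exU, exV; intros; apply ex_minus; auto. Qed.
Lemma exV_mult f g u v : exV f u v -> exV g u v -> exV (fun a b => f a b * g a b) u v.
Proof. unfold exU, exV; intros; apply ex_mult; auto. Qed.
Lemma exV_div f g u v : exV f u v -> exV g u v -> g u v <> 0 -> exV (fun a b => f a b / g a b) u v.
Proof. unfold exU, exV; intros; apply ex_div; auto. Qed.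
Lemma exV_pow2 f u v : exV f u v -> exV (fun a b => f a b ^ 2) u v.
Proof. unfold exU, exV; intros; apply ex_pow2; auto. Qed.

Lemma exU_const c u v : exU (fun _ _ => c) u v.
Proof. exists 0. apply derivable_pt_lim_const. Qed.
Lemma exV_const c u v : exV (fun _ _ => c) u v.
Proof. exists 0. apply derivable_pt_lim_const. Qed.

Lemma ex_coef z X u v : exUV (PuV z) u v -> exUV (PvV z) u v -> exUV X u v ->
  exVV (PuV z) u v -> exVV (PvV z) u v -> exVV X u v -> W2 z u v <> 0 ->
  exU (coefA z X) u v /\ exU (coefB z X) u v /\ exV (coefA z X) u v /\ exV (coefB z X) u v.
Proof.
  intros a1 a2 a3 b1 b2 b3 HW. unfold coefA, coefB, tc1, tc2, W2, EE, FF, GG, zu, zv in *.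
  repeat split;
  repeat first [ apply exU_div | apply exU_minus | apply exU_mult | apply exU_pow2 | apply ex_dotU
               | apply exV_div | apply exV_minus | apply exV_mult | apply exV_pow2 | apply ex_dotV
               | apply exU_const | apply exV_const | assumption ].
Qed.

Lemma Pu_sp f1 g1 f2 g2 u v : exU f1 u v -> exU g1 u v -> exU f2 u v -> exU g2 u v ->
  Pu (fun a b => f1 a b * g1 a b + f2 a b * g2 a b) u v =
  Pu f1 u v * g1 u v + f1 u v * Pu g1 u v + (Pu f2 u v * g2 u v + f2 u v * Pu g2 u v).
Proof. unfold exU; intros. rewrite Pu_D1, D1_plus, !D1_mult; auto; apply ex_mult; auto. Qed.
Lemma Pv_sp f1 g1 f2 g2 u v : exV f1 u v -> exV g1 u v -> exV f2 u v -> exV g2 u v ->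
  Pv (fun a b => f1 a b * g1 a b + f2 a b * g2 a b) u v =
  Pv f1 u v * g1 u v + f1 u v * Pv g1 u v + (Pv f2 u v * g2 u v + f2 u v * Pv g2 u v).
Proof. unfold exV; intros. rewrite Pv_D1, D1_plus, !D1_mult; auto; apply ex_mult; auto. Qed.

Lemma D1_local f g x r : 0 < r -> (forall t, Rabs (t - x) < r -> f t = g t) -> exD g x ->
  D1 f x = D1 g x.
Proof. intros Hr H Hg. apply D1_eq. apply (dl_local f g x _ r Hr H). apply D1_spec; auto. Qed.

Lemma PuV_scal_dot A w N u v r : 0 < r ->
  (forall t, Rabs (t - u) < r -> A t v = vscal (w t v) (N t v)) ->
  exU w u v -> exUV N u v ->
  dot (PuV A u v) (N u v) = Pu w u v * dot (N u v) (N u v) + w u v * dot (PuV N u v) (N u v).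
Proof.
  intros Hr H Hw (n1&n2&n3&n4).
  assert (E : PuV A u v = vadd (vscal (Pu w u v) (N u v)) (vscal (w u v) (PuV N u v))).
  { unfold PuV, vadd, vscal; simpl. rewrite !Pu_D1.
    f_equal; [ (erewrite (D1_local _ (fun t => w t v * v1 (N t v)) u r Hr); [ rewrite D1_mult by auto; reflexivity | intros t Ht; rewrite (H t Ht); reflexivity | apply ex_mult; auto ]) | (erewrite (D1_local _ (fun t => w t v * v2 (N t v)) u r Hr); [ rewrite D1_mult by auto; reflexivity | intros t Ht; rewrite (H t Ht); reflexivity | apply ex_mult; auto ]) | (erewrite (D1_local _ (fun t => w t v * v3 (N t v)) u r Hr); [ rewrite D1_mult by auto; reflexivity | intros t Ht; rewrite (H t Ht); reflexivity | apply ex_mult; auto ]) | (erewrite (D1_local _ (fun t => w t v * v4 (N t v)) u r Hr); [ rewrite D1_mult by auto; reflexivity | intros t Ht; rewrite (H t Ht); reflexivity | apply ex_mult; auto ]) ]. }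
  rewrite E, dot_lin. reflexivity.
Qed.
Lemma PvV_scal_dot A w N u v r : 0 < r ->
  (forall t, Rabs (t - v) < r -> A u t = vscal (w u t) (N u t)) ->
  exV w u v -> exVV N u v ->
  dot (PvV A u v) (N u v) = Pv w u v * dot (N u v) (N u v) + w u v * dot (PvV N u v) (N u v).
Proof.
  intros Hr H Hw (n1&n2&n3&n4).
  assert (E : PvV A u v = vadd (vscal (Pv w u v) (N u v)) (vscal (w u v) (PvV N u v))).
  { unfold PvV, vadd, vscal; simpl. rewrite !Pv_D1.
    f_equal; [ (erewrite (D1_local _ (fun t => w u t * v1 (N u t)) v r Hr); [ rewrite D1_mult by auto; reflexivity | intros t Ht; rewrite (H t Ht); reflexivity | apply ex_mult; auto ]) | (erewrite (D1_local _ (fun t => w u t * v2 (N u t)) v r Hr); [ rewrite D1_mult by auto; reflexivity | intros t Ht; rewrite (H t Ht); reflexivity | apply ex_mult; auto ]) | (erewrite (D1_local _ (fun t => w u t * v3 (N u t)) v r Hr); [ rewrite D1_mult by auto; reflexivity | intros t Ht; rewrite (H t Ht); reflexivity | apply ex_mult; auto ]) | (erewrite (D1_local _ (fun t => w u t * v4 (N u t)) v r Hr); [ rewrite D1_mult by auto; reflexivity | intros t Ht; rewrite (H t Ht); reflexivity | apply ex_mult; auto ]) ]. }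
  rewrite E, dot_lin. reflexivity.
Qed.

Lemma Pu_localconst f u v c r : 0 < r -> (forall t, Rabs (t - u) < r -> f t v = c) -> Pu f u v = 0.
Proof. intros Hr H. rewrite Pu_D1. apply D1_eq. apply (dl_localconst _ u c r Hr H). Qed.
Lemma Pv_localconst f u v c r : 0 < r -> (forall t, Rabs (t - v) < r -> f u t = c) -> Pv f u v = 0.
Proof. intros Hr H. rewrite Pv_D1. apply D1_eq. apply (dl_localconst _ v c r Hr H). Qed.

Lemma open_lines D u v : open2 D -> D u v -> exists r, 0 < r /\
  (forall t, Rabs (t - u) < r -> D t v) /\ (forall t, Rabs (t - v) < r -> D u t).
Proof.
  intros Ho H. destruct (Ho u v H) as (r&Hr&Hd). exists r; repeat split; auto; intros t Ht; apply Hd; auto;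
  replace (_ - _) with 0 by ring; rewrite Rabs_R0; auto.
Qed.

Lemma deriv_dotc D A B c u v : open2 D -> D u v ->
  (forall a b, D a b -> dot (A a b) (B a b) = c) ->
  exUV A u v -> exUV B u v -> exVV A u v -> exVV B u v ->
  dot (PuV A u v) (B u v) + dot (A u v) (PuV B u v) = 0 /\
  dot (PvV A u v) (B u v) + dot (A u v) (PvV B u v) = 0.
Proof.
  intros Ho Huv Hc a1 a2 a3 a4. destruct (open_lines D u v Ho Huv) as (r&Hr&L1&L2).
  split.
  - rewrite <- Pu_dot by auto. apply (Pu_localconst _ u v c r Hr). intros; apply Hc; auto.
  - rewrite <- Pv_dot by auto. apply (Pv_localconst _ u v c r Hr). intros; apply Hc; auto.
Qed.

Lemma clairautV D X u v : open2 D -> smoothV D X -> D u v -> PuV (PvV X) u v = PvV (PuV X) u v.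
Proof.
  intros Ho (s1&s2&s3&s4) H. unfold PuV, PvV; simpl. f_equal.
  - exact (clairaut D _ u v Ho s1 H).
  - exact (clairaut D _ u v Ho s2 H).
  - exact (clairaut D _ u v Ho s3 H).
  - exact (clairaut D _ u v Ho s4 H).
Qed.

Lemma dot_dec4 a1 e1 a2 e2 a3 e3 a4 e4 w :
  dot (vadd (vscal a1 e1) (vadd (vscal a2 e2) (vadd (vscal a3 e3) (vscal a4 e4)))) w =
  a1 * dot e1 w + a2 * dot e2 w + a3 * dot e3 w + a4 * dot e4 w.
Proof. unfold dot, vadd, vscal; simpl; ring. Qed.

Lemma frame_at D z x y n1 n2 a b :
  (forall u v, D u v -> 0 < W2 z u v) -> adapted_frame z D x y n1 n2 -> D a b ->
  ortho4 (x a b) (y a b) (n1 a b) (n2 a b) /\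
  x a b = vadd (vscal (coefA z x a b) (zu z a b)) (vscal (coefB z x a b) (zv z a b)) /\
  y a b = vadd (vscal (coefA z y a b) (zu z a b)) (vscal (coefB z y a b) (zv z a b)) /\
  dot (n1 a b) (zu z a b) = 0 /\ dot (n1 a b) (zv z a b) = 0 /\
  dot (n2 a b) (zu z a b) = 0 /\ dot (n2 a b) (zv z a b) = 0 /\ W2 z a b <> 0.
Proof.
  intros HW Hf Hab. assert (HW' : W2 z a b <> 0) by (specialize (HW a b Hab); lra).
  destruct (Hf a b Hab) as (ox&oy&on1&on2&oxy&oxn1&oxn2&oyn1&oyn2&on12&[ax [bx Hxs]]&[ay [by' Hys]]&p11&p12&p21&p22&Hdet).
  unfold coefA, coefB. rewrite Hxs, Hys.
  destruct (tc_span z a b ax bx HW') as [t1 t2]. destruct (tc_span z a b ay by' HW') as [t3 t4].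
  rewrite t1, t2, t3, t4. rewrite <- Hxs, <- Hys.
  repeat split; auto. lra.
Qed.

Definition omega z (Y n1 n2 : field) : R -> R -> R := fun a b =>
  coefA z Y a b * dot (PuV n2 a b) (n1 a b) + coefB z Y a b * dot (PvV n2 a b) (n1 a b).

Lemma unit_deriv D n a b : open2 D -> smoothV D n -> D a b ->
  (forall u v, D u v -> dot (n u v) (n u v) = 1) ->
  dot (PuV n a b) (n a b) = 0 /\ dot (PvV n a b) (n a b) = 0.
Proof.
  intros Ho Hs Hab Hu. destruct (smoothV_ex D n a b Hs Hab) as (e1&e2&_).
  destruct (deriv_dotc D n n 1 a b Ho Hab Hu e1 e1 e2 e2) as [H1 H2].
  rewrite (dot_comm (n a b) (PuV n a b)) in H1. rewrite (dot_comm (n a b) (PvV n a b)) in H2.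
  split; lra.
Qed.

Lemma Wloc D z x y n1 n2 Y a b : open2 D ->
  (forall u v, D u v -> 0 < W2 z u v) -> adapted_frame z D x y n1 n2 -> smoothV D n2 -> D a b ->
  Dn z Y n2 a b = vscal (omega z Y n1 n2 a b) (n1 a b).
Proof.
  intros Ho HW Hf Hs Hab.
  destruct (frame_at D z x y n1 n2 a b HW Hf Hab) as (Ho4&HX&HY&p1&p2&p3&p4&HW').
  assert (Hu : forall u v, D u v -> dot (n2 u v) (n2 u v) = 1) by (intros u v H; apply (Hf u v H)).
  destruct (unit_deriv D n2 a b Ho Hs Hab Hu) as [d1 d2].
  unfold Dn. rewrite (nrm_dec z a b _ _ _ _ _ _ _ _ _ HW' Ho4 HX HY p1 p2 p3 p4).
  unfold nabla'. rewrite !dot_lin, d1, d2. unfold omega.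
  destruct (n1 a b), (n2 a b). unfold vadd, vscal; simpl; f_equal; ring.
Qed.

Lemma Tlemma D z x y n1 n2 X Y u v : open2 D -> smoothV D z ->
  (forall u v, D u v -> 0 < W2 z u v) -> adapted_frame z D x y n1 n2 ->
  smoothV D n1 -> smoothV D n2 -> smoothV D Y -> D u v ->
  dot (Dn z X (Dn z Y n2) u v) (n1 u v) =
  coefA z X u v * Pu (omega z Y n1 n2) u v + coefB z X u v * Pv (omega z Y n1 n2) u v.
Proof.
  intros Ho Hz HW Hf Hs1 Hs2 HsY Huv.
  destruct (frame_at D z x y n1 n2 u v HW Hf Huv) as (Ho4&HX&HY&p1&p2&p3&p4&HW').
  assert (Hu : forall u v, D u v -> dot (n1 u v) (n1 u v) = 1) by (intros a b H; apply (Hf a b H)).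
  destruct (unit_deriv D n1 u v Ho Hs1 Huv Hu) as [d1 d2].
  destruct (open_lines D u v Ho Huv) as (r&Hr&L1&L2).
  destruct (smoothV_ex D z u v Hz Huv) as (z1&z2&z3&z4&z5&z6).
  destruct (smoothV_ex D n1 u v Hs1 Huv) as (m1&m2&m3&m4&m5&m6).
  destruct (smoothV_ex D n2 u v Hs2 Huv) as (k1&k2&k3&k4&k5&k6).
  destruct (smoothV_ex D Y u v HsY Huv) as (y1&y2&y3&y4&y5&y6).
  destruct (ex_coef z Y u v z3 z5 y1 z4 z6 y2 HW') as (c1&c2&c3&c4).
  change (Dn z X (Dn z Y n2) u v) with (nrm z u v (nabla' z X (Dn z Y n2) u v)).
  rewrite (nrm_dot z u v _ _ p1 p2). unfold nabla'. rewrite dot_lin.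
  rewrite (PuV_scal_dot (Dn z Y n2) (omega z Y n1 n2) n1 u v r Hr).
  2:{ intros t Ht. apply (Wloc D z x y n1 n2 Y t v Ho HW Hf Hs2 (L1 t Ht)). }
  2:{ unfold omega. apply exU_plus; apply exU_mult; auto; apply ex_dotU; auto. }
  2: auto.
  rewrite (PvV_scal_dot (Dn z Y n2) (omega z Y n1 n2) n1 u v r Hr).
  2:{ intros t Ht. apply (Wloc D z x y n1 n2 Y u t Ho HW Hf Hs2 (L2 t Ht)). }
  2:{ unfold omega. apply exV_plus; apply exV_mult; auto; apply ex_dotV; auto. }
  2: auto.
  rewrite d1, d2, (Hu u v Huv). ring.
Qed.

Theorem proposition3p4
  (D : R -> R -> Prop) (z x y n1 n2 : field) :
  open2 D ->
  smoothV D z ->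
  (forall u v, D u v -> 0 < W2 z u v) ->
  smoothV D x -> smoothV D y -> smoothV D n1 -> smoothV D n2 ->
  adapted_frame z D x y n1 n2 ->
  minimal_wrt z D x y ->
  forall u v, D u v ->
  forall e1 e2 : V4, pos_normal_frame z u v e1 e2 ->
    varkappa z u v e1 e2 = dot (Rperp z x y n2 u v) (n1 u v).
Proof.
  intros Ho Hz HW Hx Hy Hs1 Hs2 Hf _ u v Huv e1 e2 He.
  destruct (frame_at D z x y n1 n2 u v HW Hf Huv) as (Ho4&HX&HY&p1&p2&p3&p4&HW').
  destruct (smoothV_ex D z u v Hz Huv) as (z1&z2&z3&z4&z5&z6).
  destruct (smoothV_ex D n1 u v Hs1 Huv) as (m1&m2&m3&m4&m5&m6).
  destruct (smoothV_ex D n2 u v Hs2 Huv) as (k1&k2&k3&k4&k5&k6).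
  destruct (smoothV_ex D x u v Hx Huv) as (x1&x2&x3&x4&x5&x6).
  destruct (smoothV_ex D y u v Hy Huv) as (y1&y2&y3&y4&y5&y6).
  destruct (ex_coef z x u v z3 z5 x1 z4 z6 x2 HW') as (cx1&cx2&cx3&cx4).
  destruct (ex_coef z y u v z3 z5 y1 z4 z6 y2 HW') as (cy1&cy2&cy3&cy4).
  assert (ep : exU (fun a b => dot (PuV n2 a b) (n1 a b)) u v) by (apply ex_dotU; auto).
  assert (eq' : exU (fun a b => dot (PvV n2 a b) (n1 a b)) u v) by (apply ex_dotU; auto).
  assert (ep' : exV (fun a b => dot (PuV n2 a b) (n1 a b)) u v) by (apply ex_dotV; auto).
  assert (eq'' : exV (fun a b => dot (PvV n2 a b) (n1 a b)) u v) by (apply ex_dotV; auto).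
  assert (R1 : dot (Rperp z x y n2 u v) (n1 u v) =
     (coefA z x u v * coefB z y u v - coefB z x u v * coefA z y u v) *
     (Pu (fun a b => dot (PvV n2 a b) (n1 a b)) u v - Pv (fun a b => dot (PuV n2 a b) (n1 a b)) u v)).
  { unfold Rperp. rewrite dot_sub3.
    rewrite (Tlemma D z x y n1 n2 x y u v Ho Hz HW Hf Hs1 Hs2 Hy Huv).
    rewrite (Tlemma D z x y n1 n2 y x u v Ho Hz HW Hf Hs1 Hs2 Hx Huv).
    unfold Dn at 1. rewrite (nrm_dot z u v _ _ p1 p2). unfold nabla'. rewrite dot_lin.
    unfold coefA at 3, coefB at 3. unfold bracket.
    destruct (tc_span z u v
      (derivF z x (coefA z y) u v - derivF z y (coefA z x) u v)
      (derivF z x (coefB z y) u v - derivF z y (coefB z x) u v) HW') as [t1 t2].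
    rewrite t1, t2. unfold omega.
    rewrite !Pu_sp, !Pv_sp by auto.
    unfold derivF. ring. }
  assert (R2 : Pu (fun a b => dot (PvV n2 a b) (n1 a b)) u v - Pv (fun a b => dot (PuV n2 a b) (n1 a b)) u v
     = dot (PvV n2 u v) (PuV n1 u v) - dot (PuV n2 u v) (PvV n1 u v)).
  { rewrite (Pu_dot (PvV n2) n1 u v k5 m1), (Pv_dot (PuV n2) n1 u v k4 m2).
    rewrite (clairautV D n2 u v Ho Hs2 Huv). ring. }
  assert (Hu1 : forall a b, D a b -> dot (n1 a b) (n1 a b) = 1) by (intros a b H; apply (Hf a b H)).
  assert (Hu2 : forall a b, D a b -> dot (n2 a b) (n2 a b) = 1) by (intros a b H; apply (Hf a b H)).
  destruct (unit_deriv D n1 u v Ho Hs1 Huv Hu1) as [u1 u2].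
  destruct (unit_deriv D n2 u v Ho Hs2 Huv Hu2) as [u3 u4].
  assert (P11 : forall a b, D a b -> dot (n1 a b) (zu z a b) = 0) by (intros a b H; apply (Hf a b H)).
  assert (P12 : forall a b, D a b -> dot (n1 a b) (zv z a b) = 0) by (intros a b H; apply (Hf a b H)).
  assert (P21 : forall a b, D a b -> dot (n2 a b) (zu z a b) = 0) by (intros a b H; apply (Hf a b H)).
  assert (P22 : forall a b, D a b -> dot (n2 a b) (zv z a b) = 0) by (intros a b H; apply (Hf a b H)).
  assert (Cz : PuV (zv z) u v = zuv z u v) by exact (clairautV D z u v Ho Hz Huv).
  destruct (deriv_dotc D n1 (zu z) 0 u v Ho Huv P11 m1 z3 m2 z4) as [q1 q2].
  destruct (deriv_dotc D n1 (zv z) 0 u v Ho Huv P12 m1 z5 m2 z6) as [q3 q4].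
  destruct (deriv_dotc D n2 (zu z) 0 u v Ho Huv P21 k1 z3 k2 z4) as [q5 q6].
  destruct (deriv_dotc D n2 (zv z) 0 u v Ho Huv P22 k1 z5 k2 z6) as [q7 q8].
  change (PuV (zu z) u v) with (zuu z u v) in q1, q5.
  change (PvV (zu z) u v) with (zuv z u v) in q2, q6.
  change (PvV (zv z) u v) with (zvv z u v) in q4, q8.
  rewrite Cz in q3, q7.
  rewrite (lemmaC (zu z u v) (zv z u v) (zuu z u v) (zuv z u v) (zvv z u v) (x u v) (y u v) (n1 u v) (n2 u v)
     (PuV n1 u v) (PvV n1 u v) (PuV n2 u v) (PvV n2 u v) _ _ _ _ Ho4 HX HY u1 u2 u3 u4) in R2 by lra.
  rewrite R1, R2. clear R1 R2.
  destruct He as (o1&o2&o12&a1&a2&b1&b2&Hdet).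
  assert (ecomp : forall e, dot e (zu z u v) = 0 -> dot e (zv z u v) = 0 ->
     e = vadd (vscal (dot e (n1 u v)) (n1 u v)) (vscal (dot e (n2 u v)) (n2 u v))).
  { intros e h1 h2. rewrite (decomp _ _ _ _ e Ho4) at 1.
    assert (dot e (x u v) = 0) by (rewrite HX, dot_linr, h1, h2; ring).
    assert (dot e (y u v) = 0) by (rewrite HY, dot_linr, h1, h2; ring).
    rewrite H, H0. destruct (x u v), (y u v), (n1 u v), (n2 u v).
    unfold vadd, vscal; simpl; f_equal; ring. }
  pose proof (ecomp e1 a1 a2) as E1. pose proof (ecomp e2 b1 b2) as E2.
  destruct (sigma_c z u v e1 HW' a1 a2) as (s1&s2&s3).
  destruct (sigma_c z u v e2 HW' b1 b2) as (s4&s5&s6).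
  set (al := dot e1 (n1 u v)) in *. set (be := dot e1 (n2 u v)) in *.
  set (ga := dot e2 (n1 u v)) in *. set (de := dot e2 (n2 u v)) in *.
  assert (Hc : forall w, dot (vadd (vscal al (n1 u v)) (vscal be (n2 u v))) w = al * dot (n1 u v) w + be * dot (n2 u v) w)
    by (intros; apply dot_lin).
  assert (Ce1 : forall w, dot e1 w = al * dot (n1 u v) w + be * dot (n2 u v) w)
    by (intros w; rewrite E1 at 1; apply dot_lin).
  assert (Ce2 : forall w, dot e2 w = ga * dot (n1 u v) w + de * dot (n2 u v) w)
    by (intros w; rewrite E2 at 1; apply dot_lin).
  assert (oa : al * al + be * be = 1).
  { rewrite <- o1. rewrite (Ce1 e1). rewrite (dot_comm (n1 u v) e1), (dot_comm (n2 u v) e1). reflexivity. }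
  assert (ob : ga * ga + de * de = 1).
  { rewrite <- o2. rewrite (Ce2 e2). rewrite (dot_comm (n1 u v) e2), (dot_comm (n2 u v) e2). reflexivity. }
  assert (oab : al * ga + be * de = 0).
  { rewrite <- o12. rewrite (Ce1 e2). rewrite (dot_comm (n1 u v) e2), (dot_comm (n2 u v) e2). reflexivity. }
  destruct Ho4 as (ox&oy&_&_&oxy&_).
  rewrite HX, !dot_lin, !dot_linr in ox.
  rewrite HY, !dot_lin, !dot_linr in oy.
  rewrite HX, HY, !dot_lin, !dot_linr in oxy.
  rewrite (dot_comm (zv z u v) (zu z u v)) in ox, oy, oxy.
  assert (Kx : 0 < (coefA z x u v * coefB z y u v - coefB z x u v * coefA z y u v) *
                   det4 (zu z u v) (zv z u v) (n1 u v) (n2 u v)).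
  { destruct (Hf u v Huv) as (_&_&_&_&_&_&_&_&_&_&_&_&_&_&_&_&Hd).
    rewrite HX, HY in Hd. eapply Rlt_le_trans; [exact Hd|]. apply Req_le.
    unfold det4, det3, vadd, vscal; simpl; ring. }
  assert (Ke : 0 < (al * de - be * ga) * det4 (zu z u v) (zv z u v) (n1 u v) (n2 u v)).
  { rewrite E1, E2 in Hdet. eapply Rlt_le_trans; [exact Hdet|]. apply Req_le.
    unfold det4, det3, vadd, vscal; simpl; ring. }
  pose proof (final_alg (EE z u v) (FF z u v) (GG z u v) (coefA z x u v) (coefB z x u v)
     (coefA z y u v) (coefB z y u v)
     (dot (n1 u v) (zuu z u v)) (dot (n1 u v) (zuv z u v)) (dot (n1 u v) (zvv z u v))
     (dot (n2 u v) (zuu z u v)) (dot (n2 u v) (zuv z u v)) (dot (n2 u v) (zvv z u v))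
     al be ga de (det4 (zu z u v) (zv z u v) (n1 u v) (n2 u v)) (WW z u v)) as FA.
  cbv zeta in FA.
  rewrite <- FA; clear FA.
  - unfold varkappa, LL, MM, NN, Delta1, Delta2, Delta3.
    rewrite s1, s2, s3, s4, s5, s6, !Ce1, !Ce2. unfold W2. reflexivity.
  - specialize (HW u v Huv). unfold W2 in HW. exact HW.
  - reflexivity.
  - unfold EE, FF, GG. rewrite <- ox. ring.
  - unfold EE, FF, GG. rewrite <- oy. ring.
  - unfold EE, FF, GG. rewrite <- oxy. ring.
  - exact oa.
  - exact ob.
  - exact oab.
  - exact Kx.
  - exact Ke.
Qed.
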